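(* Let $a\in C^1(\mathbb R)$ be convex, let $\eta\in C^2(\mathbb R)$ and let $q$ satisfy $q'=\eta'a'$. For $u^+\ne u^-$ define $$c_\eta(u^+,u^-)=q(u^+)-q(u^-)-\frac{a(u^+)-a(u^-)}{u^+-u^-}\big(\eta(u^+)-\eta(u^-)\big).$$ Then for all $u^\pm\in\mathbb R$ with $u^+\neq u^-$, $$|c_\eta(u^+,u^-)|\le\frac12\Big(\sup_{[u^-,u^+]}|\eta''|\Big)\,\Delta(u^+,u^-).$$
   Context: $a''$ denotes the distributional second derivative of $a$ (a nonnegative measure). $[u^-,u^+]$ denotes the closed segment between $u^-$ and $u^+$ regardless of order. The regularity cost is $\Delta(u_1,u_2)=\frac12\int_{u_1}^{u_2}\int_{u_1}^{u_2}|a'(v)-a'(w)|\,dv\,dw=\int_{[u_1,u_2]}(u_2-s)(s-u_1)\,a''(ds)$. *)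

(* Defs.v *)
From Stdlib Require Import Reals.
From Coquelicot Require Import Coquelicot.
Open Scope R_scope.

Definition convex_fun (a : R -> R) : Prop :=
  forall x y t, 0 <= t <= 1 -> a (t * x + (1 - t) * y) <= t * a x + (1 - t) * a y.

Definition is_C1_real (a : R -> R) : Prop :=
  (forall x, ex_derive a x) /\ (forall x, continuous (Derive a) x).

Definition is_C2_real (f : R -> R) : Prop :=
  (forall x, ex_derive f x) /\ (forall x, ex_derive (Derive f) x) /\
  (forall x, continuous (Derive (Derive f)) x).

Definition c_eta (a eta q : R -> R) (up um : R) : R :=
  q up - q um - (a up - a um) / (up - um) * (eta up - eta um).

Definition Delta_cost (a : R -> R) (u1 u2 : R) : R :=
  / 2 * RInt (fun w => RInt (fun v => Rabs (Derive a v - Derive a w)) u1 u2) u1 u2.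

(* sup of |f| over the closed segment between x and y (regardless of order);
   finite whenever f is continuous. *)
Definition sup_abs_seg (f : R -> R) (x y : R) : R :=
  real (Lub_Rbar (fun r => exists s, Rmin x y <= s <= Rmax x y /\ r = Rabs (f s))).

(* Main.v *)
Require Import Defs.
From Stdlib Require Import Reals Lra.
From Coquelicot Require Import Coquelicot.
Open Scope R_scope.
Lemma cont_abs_sub (g : R -> R) (c x : R) :
  continuous g x -> continuous (fun v => Rabs (g v - c)) x.
Proof.
  intros Hg. apply continuity_pt_filterlim.
  apply continuity_pt_filterlim in Hg.
  apply (continuity_pt_comp (fun v => g v - c) Rabs).
  - apply continuity_pt_minus; [exact Hg | apply continuity_pt_const; intros ? ?; reflexivity].
  - apply Rcontinuity_abs.
Qed.

Lemma exR_abs (g : R -> R) (c u1 u2 : R) :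
  (forall z, continuous g z) -> ex_RInt (fun v => Rabs (g v - c)) u1 u2.
Proof. intros Hg. apply (ex_RInt_continuous (V := R_CompleteNormedModule)). intros z _. apply cont_abs_sub, Hg. Qed.

Lemma inner_lip (g : R -> R) (u1 u2 x y : R) : u1 <= u2 ->
  (forall z, continuous g z) ->
  Rabs (RInt (fun v => Rabs (g v - x)) u1 u2 - RInt (fun v => Rabs (g v - y)) u1 u2)
    <= (u2 - u1) * Rabs (x - y).
Proof.
  intros Hu Hg.
  assert (E := RInt_minus (fun v => Rabs (g v - x)) (fun v => Rabs (g v - y)) u1 u2
     (exR_abs g x u1 u2 Hg) (exR_abs g y u1 u2 Hg)).
  change (minus ?a ?b) with (a - b) in E. rewrite <- E.
  apply abs_RInt_le_const; [exact Hu| |].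
  - apply (ex_RInt_minus (V := R_CompleteNormedModule)); apply exR_abs; exact Hg.
  - intros t _. change (minus ?a ?b) with (a - b).
    eapply Rle_trans; [apply Rabs_triang_inv2|]. right; rewrite <- Rabs_Ropp; f_equal; ring.
Qed.

Lemma inner_cont (g : R -> R) (u1 u2 x : R) : u1 <= u2 ->
  (forall z, continuous g z) ->
  continuous (fun x => RInt (fun v => Rabs (g v - x)) u1 u2) x.
Proof.
  intros Hu Hg. apply continuity_pt_filterlim.
  intros eps Heps. exists (eps / (u2 - u1 + 1)). split.
  { apply Rdiv_lt_0_compat; lra. }
  intros y [_ Hy]. unfold R_dist in *. simpl in *. unfold R_dist in *.
  eapply Rle_lt_trans; [apply inner_lip; assumption|].
  assert (0 <= Rabs (y - x)) by apply Rabs_pos.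
  apply Rle_lt_trans with ((u2 - u1 + 1) * Rabs (y - x)).
  { apply Rmult_le_compat_r; lra. }
  apply Rmult_lt_reg_l with (/ (u2 - u1 + 1)). { apply Rinv_0_lt_compat; lra. }
  rewrite <- Rmult_assoc, Rinv_l by lra. rewrite Rmult_1_l.
  unfold Rdiv in Hy. rewrite Rmult_comm. exact Hy.
Qed.
Lemma sup_bound (f : R -> R) (x y s : R) :
  (forall z, continuous f z) -> Rmin x y <= s <= Rmax x y ->
  Rabs (f s) <= sup_abs_seg f x y.
Proof.
  intros Hf Hs. unfold sup_abs_seg.
  set (E := fun r => exists s0, Rmin x y <= s0 <= Rmax x y /\ r = Rabs (f s0)).
  destruct (continuity_ab_maj (fun s0 => Rabs (f s0)) (Rmin x y) (Rmax x y)) as [Mx [HM HMx]].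
  { apply Rmin_Rmax. }
  { intros c _. apply (continuity_pt_comp f Rabs).
    - apply continuity_pt_filterlim; apply Hf.
    - apply Rcontinuity_abs. }
  destruct (Lub_Rbar_correct E) as [Hub Hlub].
  assert (H1 : Rbar_le (Lub_Rbar E) (Finite (Rabs (f Mx)))).
  { apply Hlub. intros r [s0 [Hs0 ->]]. simpl. apply HM; exact Hs0. }
  assert (H2 : Rbar_le (Finite (Rabs (f s))) (Lub_Rbar E)).
  { apply Hub. exists s; split; [exact Hs | reflexivity]. }
  destruct (Lub_Rbar E) as [l| |]; simpl in *; try contradiction; exact H2.
Qed.
Lemma D_nonneg (a : R -> R) (u1 u2 t : R) : convex_fun a -> u1 < u2 -> u1 <= t <= u2 ->
  0 <= a u1 + (a u2 - a u1) / (u2 - u1) * (t - u1) - a t.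
Proof.
  intros Hc Hu Ht.
  set (s := (u2 - t) / (u2 - u1)).
  assert (Hs : 0 <= s <= 1).
  { unfold s; split.
    - apply Rdiv_le_0_compat; lra.
    - apply Rmult_le_reg_r with (u2 - u1); [lra|].
      unfold Rdiv; rewrite Rmult_assoc, Rinv_l by lra; lra. }
  specialize (Hc u1 u2 s Hs).
  replace (s * u1 + (1 - s) * u2) with t in Hc by (unfold s; field; lra).
  replace (s * a u1 + (1 - s) * a u2) with (a u1 + (a u2 - a u1) / (u2 - u1) * (t - u1)) in Hc
    by (unfold s; field; lra).
  lra.
Qed.

Lemma stepA (a eta q : R -> R) (u1 u2 : R) : u1 < u2 ->
  (forall x, ex_derive a x) -> is_C2_real eta ->
  (forall x, is_derive q x (Derive eta x * Derive a x)) ->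
  is_RInt (fun t => Derive (Derive eta) t * (a u1 + (a u2 - a u1) / (u2 - u1) * (t - u1) - a t))
     u1 u2 (c_eta a eta q u2 u1).
Proof.
  intros Hu Ha [He1 [He2 He3]] Hq.
  set (A := (a u2 - a u1) / (u2 - u1)).
  set (F := fun t => Derive eta t * (a u1 + A * (t - u1) - a t) - A * eta t + q t).
  replace (c_eta a eta q u2 u1) with (minus (F u2) (F u1)).
  2:{ unfold minus, plus, opp; simpl. unfold F, c_eta, A. field. lra. }
  apply (is_RInt_derive (V := R_CompleteNormedModule)).
  - intros x _. unfold F.
    assert (Eq : Derive q x = Derive eta x * Derive a x) by (apply is_derive_unique; apply Hq).
    auto_derive.
    + repeat split; auto. exists (Derive eta x * Derive a x). apply Hq.
    + change (Derive (fun x0 : R => q x0) x) with (Derive q x).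
      change (Derive (fun x0 : R => eta x0) x) with (Derive eta x).
      change (Derive (fun x0 : R => a x0) x) with (Derive a x).
      change (Derive (fun x0 : R => Derive eta x0) x) with (Derive (Derive eta) x).
      rewrite Eq. ring.
  - intros x _. apply (continuous_mult (K := R_AbsRing) (Derive (Derive eta))
       (fun t => a u1 + A * (t - u1) - a t)).
    + apply He3.
    + assert (Hex : ex_derive (fun t => a u1 + A * (t - u1) - a t) x) by (auto_derive; auto).
      exact (ex_derive_continuous _ x Hex).
Qed.
Lemma lin_int (a : R -> R) (c s u v : R) :
  (forall x, ex_derive a x) -> (forall z, continuous (Derive a) z) ->
  is_RInt (fun t => s * (Derive a t - c)) u v (s * ((a v - c * v) - (a u - c * u))).
Proof.
  intros Ha Hg.
  set (F := fun t => s * (a t - c * t)).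
  replace (s * ((a v - c * v) - (a u - c * u))) with (minus (F v) (F u))
    by (unfold minus, plus, opp, F; simpl; ring).
  apply (is_RInt_derive (V := R_CompleteNormedModule)).
  - intros x _. unfold F. auto_derive; [apply Ha|].
    change (Derive (fun x0 : R => a x0) x) with (Derive a x). ring.
  - intros x _.
    apply continuity_pt_filterlim.
    apply (continuity_pt_scal (fun t => Derive a t - c)).
    apply continuity_pt_minus; [apply continuity_pt_filterlim, Hg | apply continuity_pt_const; intros ? ?; reflexivity].
Qed.

Lemma stepB (a : R -> R) (u1 u2 w : R) : u1 <= w <= u2 ->
  (forall x, ex_derive a x) -> (forall z, continuous (Derive a) z) ->
  Derive a w * (2 * w - u1 - u2) + a u1 + a u2 - 2 * a w <=
  RInt (fun v => Rabs (Derive a v - Derive a w)) u1 u2.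
Proof.
  intros Hw Ha Hg.
  rewrite <- (RInt_Chasles (V := R_CompleteNormedModule) (fun v => Rabs (Derive a v - Derive a w)) u1 w u2) by (apply exR_abs; exact Hg).
  change (plus ?x ?y) with (x + y).
  assert (H1 : (-1) * ((a w - Derive a w * w) - (a u1 - Derive a w * u1)) <=
     RInt (fun v => Rabs (Derive a v - Derive a w)) u1 w).
  { apply (is_RInt_le (fun t => (-1) * (Derive a t - Derive a w)) (fun v => Rabs (Derive a v - Derive a w)) u1 w _ _ (proj1 Hw) (lin_int a _ (-1) u1 w Ha Hg)).
    - apply (RInt_correct (V := R_CompleteNormedModule)); apply exR_abs; exact Hg.
    - intros x _. assert (Habs := Rabs_maj2 (Derive a x - Derive a w)); lra. }
  assert (H2 : 1 * ((a u2 - Derive a w * u2) - (a w - Derive a w * w)) <=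
     RInt (fun v => Rabs (Derive a v - Derive a w)) w u2).
  { apply (is_RInt_le (fun t => 1 * (Derive a t - Derive a w)) (fun v => Rabs (Derive a v - Derive a w)) w u2 _ _ (proj2 Hw) (lin_int a _ 1 w u2 Ha Hg)).
    - apply (RInt_correct (V := R_CompleteNormedModule)); apply exR_abs; exact Hg.
    - intros x _. assert (Habs := Rle_abs (Derive a x - Derive a w)); lra. }
  lra.
Qed.
Lemma stepC (a : R -> R) (u1 u2 : R) : u1 < u2 ->
  (forall x, ex_derive a x) -> (forall z, continuous (Derive a) z) ->
  is_RInt (fun w => Derive a w * (2 * w - u1 - u2) + a u1 + a u2 - 2 * a w) u1 u2
    (4 * RInt (fun t => a u1 + (a u2 - a u1) / (u2 - u1) * (t - u1) - a t) u1 u2).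
Proof.
  intros Hu Ha Hg.
  set (A := (a u2 - a u1) / (u2 - u1)).
  set (D := fun t => a u1 + A * (t - u1) - a t).
  assert (HD : forall x, ex_derive D x) by (intros x; unfold D; auto_derive; auto).
  assert (H0 : is_RInt (fun w => Derive a w * (2 * w - u1 - u2) + a u1 + a u2 - 2 * a w - 4 * D w) u1 u2 0).
  { set (G := fun w => a w * (2 * w - u1 - u2) + (a u1 + a u2) * w
                 - 4 * (a u1 * (w - u1) + A * (w - u1) * (w - u1) / 2)).
    replace 0 with (minus (G u2) (G u1)).
    2:{ unfold minus, plus, opp, G, A; simpl. field. lra. }
    apply (is_RInt_derive (V := R_CompleteNormedModule)).
    - intros x _. unfold G, D. auto_derive; [apply Ha|].
      change (Derive (fun x0 : R => a x0) x) with (Derive a x). field.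
    - intros x _.
      assert (Hc : continuous (fun w => (2 * w - u1 - u2) * Derive a w + (a u1 + a u2 - 4 * a u1 - 4 * A * (w - u1) + 2 * a w)) x).
      { apply continuity_pt_filterlim.
        apply continuity_pt_plus.
        - apply continuity_pt_mult.
          + apply continuity_pt_filterlim. assert (Hex : ex_derive (fun w => 2 * w - u1 - u2) x) by (auto_derive; auto).
            exact (ex_derive_continuous _ x Hex).
          + apply continuity_pt_filterlim, Hg.
        - apply continuity_pt_filterlim.
          assert (Hex : ex_derive (fun w => a u1 + a u2 - 4 * a u1 - 4 * A * (w - u1) + 2 * a w) x) by (auto_derive; auto).
          exact (ex_derive_continuous _ x Hex). }
      assert (Heqf : forall y : R, (2 * y - u1 - u2) * Derive a y +
         (a u1 + a u2 - 4 * a u1 - 4 * A * (y - u1) + 2 * a y) =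
         Derive a y * (2 * y - u1 - u2) + a u1 + a u2 - 2 * a y - 4 * D y)
        by (intros y; unfold D; ring).
      eapply continuous_ext; [|exact Hc].
      intros y. exact (Heqf y). }
  assert (HI : is_RInt D u1 u2 (RInt D u1 u2)).
  { apply (RInt_correct (V := R_CompleteNormedModule)).
    apply (ex_RInt_continuous (V := R_CompleteNormedModule)).
    intros z _. exact (ex_derive_continuous _ z (HD z)). }
  assert (HS := is_RInt_plus _ _ _ _ _ _ H0 (is_RInt_scal _ _ _ 4 _ HI)).
  replace (4 * RInt D u1 u2) with (plus 0 (scal 4 (RInt D u1 u2)))
    by (unfold plus, scal; simpl; unfold mult; simpl; ring).
  eapply is_RInt_ext; [|exact HS].
  intros x _. unfold plus, scal; simpl; unfold mult; simpl. ring.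
Qed.

Lemma main_ord (a eta q : R -> R) (u1 u2 M : R) : u1 < u2 ->
  is_C1_real a -> convex_fun a -> is_C2_real eta ->
  (forall x, is_derive q x (Derive eta x * Derive a x)) ->
  (forall s, u1 <= s <= u2 -> Rabs (Derive (Derive eta) s) <= M) ->
  Rabs (c_eta a eta q u2 u1) <= / 2 * M * Delta_cost a u1 u2.
Proof.
  intros Hu [Ha Hg] Hconv Heta Hq HM.
  assert (HM0 : 0 <= M) by (eapply Rle_trans; [apply Rabs_pos | apply (HM u1); lra]).
  set (D := fun t => a u1 + (a u2 - a u1) / (u2 - u1) * (t - u1) - a t).
  assert (HA := stepA a eta q u1 u2 Hu Ha Heta Hq).
  assert (HDc : forall x, continuous D x).
  { intros x. assert (Hex : ex_derive D x) by (unfold D; auto_derive; auto).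
    exact (ex_derive_continuous _ x Hex). }
  assert (HI : is_RInt D u1 u2 (RInt D u1 u2)).
  { apply (RInt_correct (V := R_CompleteNormedModule)).
    apply (ex_RInt_continuous (V := R_CompleteNormedModule)). intros z _; apply HDc. }
  assert (HMD : is_RInt (fun t => M * D t) u1 u2 (M * RInt D u1 u2)).
  { exact (is_RInt_scal _ _ _ M _ HI). }
  assert (Hc1 : Rabs (c_eta a eta q u2 u1) <= M * RInt D u1 u2).
  { apply (norm_RInt_le (V := R_NormedModule) (fun t => Derive (Derive eta) t * D t) (fun t => M * D t) u1 u2 _ _ (Rlt_le _ _ Hu)); [|exact HA|exact HMD].
    intros x Hx. change (norm ?y) with (Rabs y).
    rewrite Rabs_mult. rewrite (Rabs_pos_eq (D x)) by (apply D_nonneg; auto).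
    apply Rmult_le_compat_r; [apply D_nonneg; auto | apply HM; exact Hx]. }
  set (Inner := fun w => RInt (fun v => Rabs (Derive a v - Derive a w)) u1 u2).
  assert (HIn : ex_RInt Inner u1 u2).
  { apply (ex_RInt_continuous (V := R_CompleteNormedModule)). intros z _.
    unfold Inner.
    apply (continuous_comp (Derive a) (fun x => RInt (fun v => Rabs (Derive a v - x)) u1 u2) z).
    - apply Hg.
    - apply inner_cont; [lra | exact Hg]. }
  assert (Hc2 : 4 * RInt D u1 u2 <= RInt Inner u1 u2).
  { apply (is_RInt_le (fun w => Derive a w * (2 * w - u1 - u2) + a u1 + a u2 - 2 * a w) Inner u1 u2 _ _ (Rlt_le _ _ Hu) (stepC a u1 u2 Hu Ha Hg)).
    - apply (RInt_correct (V := R_CompleteNormedModule)); exact HIn.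
    - intros x Hx. unfold Inner. apply stepB; auto; lra. }
  unfold Delta_cost. fold Inner.
  apply Rle_trans with (M * RInt D u1 u2); [exact Hc1|].
  apply Rle_trans with (M * (/ 4 * RInt Inner u1 u2)).
  - apply Rmult_le_compat_l; [exact HM0|]. lra.
  - right. field.
Qed.

Lemma inner_ex (a : R -> R) (u1 u2 : R) : u1 <= u2 -> is_C1_real a ->
  ex_RInt (fun w => RInt (fun v => Rabs (Derive a v - Derive a w)) u1 u2) u1 u2.
Proof.
  intros Hu [Ha Hg].
  apply (ex_RInt_continuous (V := R_CompleteNormedModule)). intros z _.
  apply (continuous_comp (Derive a) (fun x => RInt (fun v => Rabs (Derive a v - x)) u1 u2) z).
  - apply Hg.
  - apply inner_cont; [lra | exact Hg].
Qed.

Lemma Delta_swap (a : R -> R) (u1 u2 : R) : u1 <= u2 -> is_C1_real a ->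
  Delta_cost a u2 u1 = Delta_cost a u1 u2.
Proof.
  intros Hu Ha. unfold Delta_cost. f_equal.
  set (Inner := fun w => RInt (fun v => Rabs (Derive a v - Derive a w)) u1 u2).
  rewrite (RInt_ext (V := R_CompleteNormedModule) _ (fun w => opp (Inner w))).
  2:{ intros x _. unfold Inner. symmetry.
      apply (opp_RInt_swap (V := R_CompleteNormedModule)).
      apply exR_abs. apply (proj2 Ha). }
  rewrite (RInt_opp (V := R_CompleteNormedModule)).
  2:{ apply (ex_RInt_swap (V := R_CompleteNormedModule)). apply inner_ex; assumption. }
  apply (opp_RInt_swap (V := R_CompleteNormedModule)). apply (ex_RInt_swap (V := R_CompleteNormedModule)). apply inner_ex; assumption.
Qed.

Theorem lemma2p1 (a eta q : R -> R)
  (Ha : is_C1_real a) (Hconv : convex_fun a) (Heta : is_C2_real eta)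
  (Hq : forall x, is_derive q x (Derive eta x * Derive a x))
  (up um : R) (Hne : up <> um) :
  Rabs (c_eta a eta q up um) <=
    / 2 * sup_abs_seg (Derive (Derive eta)) um up * Delta_cost a up um.
Proof.
  assert (Hc2 : forall z, continuous (Derive (Derive eta)) z) by apply (proj2 (proj2 Heta)).
  destruct (Rlt_or_le um up) as [H|H].
  - rewrite (Delta_swap a um up) by (auto; lra).
    apply main_ord; auto.
    intros s Hs. apply sup_bound; auto.
    rewrite Rmin_left, Rmax_right by lra. exact Hs.
  - assert (H' : up < um) by lra.
    replace (c_eta a eta q up um) with (- c_eta a eta q um up).
    2:{ unfold c_eta. field. lra. }
    rewrite Rabs_Ropp.
    apply main_ord; auto.
    intros s Hs. apply sup_bound; auto.
    rewrite Rmin_right, Rmax_left by lra. exact Hs.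
Qed.
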